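(* Let $(Y,\preceq,\prec,\to)$ be a solid vector space. Then the collection of all open intervals $(a,b)=\{x\in Y: a\prec x\prec b\}$, where $a,b\in Y$ with $a\prec b$, is a basis for a Hausdorff topology on $Y$.
   Context: Vector space with convergence: a real vector space $Y$ with a relation $\to$ between sequences in $Y$ and points of $Y$ (uniqueness of limits not assumed) such that (C1) $x_n\to x$, $y_n\to y$ imply $x_n+y_n\to x+y$; (C2) $x_n\to x$, $\lambda\in\mathbb R$ imply $\lambda x_n\to\lambda x$; (C3) $\lambda_n\to\lambda$ in $\mathbb R$ imply $\lambda_n x\to\lambda x$. $A\subseteq Y$ is open if $x_n\to x\in A$ implies $x_n\in A$ for all but finitely many $n$; closed if $x_n\to x$, $x_n\in A$ $\forall n$ imply $x\in A$; $A^\circ$ is the union of all open subsets of $A$. A cone is a nonempty closed $K$ with $\lambda K\subseteq K$ ($\lambda\ge0$), $K+K\subseteq K$, $K\cap(-K)=\{0\}$; solid if $K\neq\{0\}$ and $K^\circ\neq\emptyset$. A vector ordering is a partial order $\preceq$ with (V1) $x\preceq y\Rightarrow x+z\preceq y+z$; (V2) $\lambda\ge0$, $x\preceq y\Rightarrow\lambda x\preceq\lambda y$; (V3) $x_n\to x$, $y_n\to y$, $x_n\preceq y_n$ $\forall n\Rightarrow x\preceq y$. A solid vector space $(Y,\preceq,\prec,\to)$ is such an ordered vector space whose positive cone $K=\{x:x\succeq0\}$ is solid, with $x\prec y$ iff $y-x\in K^\circ$. *)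

(* Defs.v *)
From HB Require Import structures.
From mathcomp Require Import all_boot all_order all_algebra.
From mathcomp Require Import all_classical all_reals all_analysis.
Set Implicit Arguments. Unset Strict Implicit. Unset Printing Implicit Defensive.
Import Order.TTheory GRing.Theory Num.Theory.
Import numFieldNormedType.Exports.
Local Open Scope classical_set_scope.
Local Open Scope ring_scope.

Section Defs.
Variables (R : realType) (Y : lmodType R).
Variable conv : (nat -> Y) -> Y -> Prop.

(* Vector space with convergence: axioms (C1)-(C3). *)
Definition conv_space : Prop :=
  [/\ (forall (x y : nat -> Y) a b, conv x a -> conv y b ->
          conv (fun n => x n + y n) (a + b)),
      (forall (x : nat -> Y) a (l : R), conv x a -> conv (fun n => l *: x n) (l *: a)) &
      (forall (l : nat -> R) (lam : R) (x : Y), l @ \oo --> lam ->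
          conv (fun n => l n *: x) (lam *: x))].

Definition conv_open (A : set Y) : Prop :=
  forall (u : nat -> Y) x, conv u x -> A x -> exists N, forall n, (N <= n)%N -> A (u n).

Definition conv_closed (A : set Y) : Prop :=
  forall (u : nat -> Y) x, conv u x -> (forall n, A (u n)) -> A x.

Definition conv_interior (A : set Y) : set Y :=
  [set x | exists U : set Y, [/\ conv_open U, U `<=` A & U x]].

Definition is_cone (K : set Y) : Prop :=
  [/\ K !=set0, conv_closed K,
      (forall (l : R) x, 0 <= l -> K x -> K (l *: x)),
      (forall x y, K x -> K y -> K (x + y)) &
      (forall x, K x -> K (- x) -> x = 0)].

Definition is_solid_cone (K : set Y) : Prop :=
  [/\ is_cone K, K <> [set 0] & conv_interior K !=set0].

Definition vector_ordering (le : Y -> Y -> Prop) : Prop :=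
  [/\ (forall x, le x x),
      (forall x y, le x y -> le y x -> x = y) &
      (forall x y z, le x y -> le y z -> le x z)] /\
  [/\
      (forall x y z, le x y -> le (x + z) (y + z)),
      (forall (l : R) x y, 0 <= l -> le x y -> le (l *: x) (l *: y)) &
      (forall (x y : nat -> Y) a b, conv x a -> conv y b ->
          (forall n, le (x n) (y n)) -> le a b)].

Definition solid_vector_space (le lt : Y -> Y -> Prop) : Prop :=
  [/\ conv_space, vector_ordering le,
      is_solid_cone [set x | le 0 x] &
      (forall x y, lt x y <-> conv_interior [set z | le 0 z] (y - x))].

End Defs.

Definition open_interval (Y : Type) (lt : Y -> Y -> Prop) (a b : Y) : set Y :=
  [set x | lt a x /\ lt x b].

Definition is_topology_basis (Y : Type) (B : set (set Y)) : Prop :=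
  (forall x : Y, exists U, B U /\ U x) /\
  (forall U V x, B U -> B V -> U x -> V x ->
     exists W, [/\ B W, W x & W `<=` U `&` V]).

Definition basis_generated_open (Y : Type) (B : set (set Y)) (O : set Y) : Prop :=
  forall x, O x -> exists U, [/\ B U, U x & U `<=` O].

Definition hausdorff_opens (Y : Type) (isopen : set Y -> Prop) : Prop :=
  forall x y : Y, x <> y -> exists U V,
    [/\ isopen U, isopen V, U x, V y & U `&` V = set0].

(* Main.v *)
Require Import Defs.
From HB Require Import structures.
From mathcomp Require Import all_boot all_order all_algebra.
From mathcomp Require Import all_classical all_reals all_analysis.
From mathcomp Require Import zify.
Import Order.TTheory GRing.Theory Num.Theory.
Import numFieldNormedType.Exports.
Local Open Scope classical_set_scope.
Local Open Scope ring_scope.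

Lemma zt1 (V : zmodType) (x e : V) : x + e - (x - e) = e + e.
Proof. by rewrite opprB addrCA [x + e]addrC addrK. Qed.
Lemma zt2 (V : zmodType) (x a e y : V) : y - a = (y - (x - e)) + (x - a - e).
Proof. rewrite -addrA; congr (y + _). by rewrite opprB addrC addrA subrK addrAC subrr add0r. Qed.
Lemma zt3 (V : zmodType) (x a e y : V) : a - y = (x + e - y) + (a - x - e).
Proof. rewrite [RHS]addrC [RHS]addrA; congr (_ + _). by rewrite -[a - x - e]addrA -opprD subrK. Qed.
Lemma zt4 (V : zmodType) (x y e f z : V) : z - (x - e) + (y + f - z) = y - x + (e + f).
Proof. by rewrite addrC addrA subrK opprB addrA addrAC -addrA addrACA [f + e]addrC. Qed.

Section Helpers.
Variables (R : realType) (Y : lmodType R) (conv : (nat -> Y) -> Y -> Prop).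
Hypothesis C1 : forall (x y : nat -> Y) a b, conv x a -> conv y b ->
          conv (fun n => x n + y n) (a + b).
Hypothesis C2 : forall (x : nat -> Y) a (l : R), conv x a -> conv (fun n => l *: x n) (l *: a).
Hypothesis C3 : forall (l : nat -> R) (lam : R) (x : Y), l @ \oo --> lam ->
          conv (fun n => l n *: x) (lam *: x).
Variable K : set Y.
Hypothesis Kadd : forall x y, K x -> K y -> K (x + y).
Hypothesis Kscale : forall (l : R) x, 0 <= l -> K x -> K (l *: x).

Lemma conv_cst v : conv (fun _ => v) v.
Proof.
have h : (fun _ : nat => (1:R)) @ \oo --> (1:R) by apply: cvg_cst.
have := C3 _ _ v h. by rewrite scale1r. Qed.

Lemma conv_shift p e (l : nat -> R) : l @ \oo --> 0 -> conv (fun n => p + l n *: e) p.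
Proof.
move=> hl; have := C1 _ _ _ _ (conv_cst p) (C3 _ _ e hl). by rewrite scale0r addr0.
Qed.

Lemma int_sub x : conv_interior conv K x -> K x.
Proof. by case=> U [_ UK Ux]; apply: UK. Qed.

Lemma int_addK x k : conv_interior conv K x -> K k -> conv_interior conv K (x + k).
Proof.
case=> U [Uo UK Ux] Kk; exists [set z | U (z - k)]; split => /=.
- move=> u z cu Uz. have := C1 _ _ _ _ cu (conv_cst (- k)) => /Uo [//|N HN].
  by exists N.
- move=> z /UK Kz. by have := Kadd _ _ Kz Kk; rewrite subrK.
- by rewrite addrK.
Qed.

Lemma int_add x y : conv_interior conv K x -> conv_interior conv K y ->
  conv_interior conv K (x + y).
Proof. by move=> hx /int_sub hy; apply: int_addK. Qed.

Lemma int_scale x (c : R) : 0 < c -> conv_interior conv K x ->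
  conv_interior conv K (c *: x).
Proof.
move=> c0 [U [Uo UK Ux]]; exists [set z | U (c^-1 *: z)]; split => /=.
- move=> u z cu Uz. have := C2 _ _ c^-1 cu => /Uo [//|N HN].
  by exists N.
- move=> z /UK Kz. have := Kscale _ _ (ltW c0) Kz.
  by rewrite scalerA mulfV ?scale1r // gt_eqF.
- by rewrite scalerA mulVf ?scale1r // gt_eqF.
Qed.

Lemma int_approx p e : conv_interior conv K p ->
  exists N, forall n, (N <= n)%N -> K (p - harmonic n *: e).
Proof.
case=> U [Uo UK Up].
have hl : (fun n => - harmonic n : R) @ \oo --> (0:R).
  by rewrite -oppr0; apply: cvgN; exact: cvg_harmonic.
have [N HN] := Uo _ _ (conv_shift p e _ hl) Up.
exists N => n /HN; rewrite scaleNr; exact: UK.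
Qed.

End Helpers.

Theorem theorem6p2 (R : realType) (Y : lmodType R)
  (conv : (nat -> Y) -> Y -> Prop) (le lt : Y -> Y -> Prop) :
  solid_vector_space conv le lt ->
  let B := [set U : set Y | exists a b, lt a b /\ U = open_interval lt a b] in
  is_topology_basis B /\ hausdorff_opens (basis_generated_open B).
Proof.
case=> [[C1 C2 C3] _ [[_ Kcl Ksc Kad Kanti] _ [e0 He0]] Hlt] B.
set K := [set z | le 0 z] in Kcl Ksc Kad Kanti He0 Hlt.
set Ki := conv_interior conv K in He0 Hlt.
have iadd := int_add _ _ _ C1 C3 _ Kad.
have iaddK := int_addK _ _ _ C1 C3 _ Kad.
have isc := int_scale _ _ _ C2 _ Ksc.
have isub := int_sub _ _ conv K.
have ltint : forall a b, Ki (b - a) -> lt a b by move=> a b; rewrite Hlt.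
have intlt : forall a b, lt a b -> Ki (b - a) by move=> a b; rewrite Hlt.
have ball : forall x e, Ki e -> lt (x - e) x /\ lt x (x + e).
  move=> x e He; split; apply: ltint.
  - by rewrite opprB addrC subrK.
  - by rewrite addrC addKr.
have ballB : forall x e, Ki e -> B (open_interval lt (x - e) (x + e)).
  move=> x e He; exists (x - e), (x + e); split => //; apply: ltint.
  by rewrite zt1; apply: iadd.
split; first split.
- move=> x; exists (open_interval lt (x - e0) (x + e0)); split; first exact: ballB.
  exact: ball.
- move=> U V x [a [b [_ ->]]] [c [d [_ ->]]] [ax xb] [cx xd].
  have [N1 H1] := int_approx _ _ _ C1 C3 _ _ e0 (intlt _ _ ax).
  have [N2 H2] := int_approx _ _ _ C1 C3 _ _ e0 (intlt _ _ xb).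
  have [N3 H3] := int_approx _ _ _ C1 C3 _ _ e0 (intlt _ _ cx).
  have [N4 H4] := int_approx _ _ _ C1 C3 _ _ e0 (intlt _ _ xd).
  set n := maxn (maxn N1 N2) (maxn N3 N4).
  have hn : (0:R) < harmonic n by apply: harmonic_gt0.
  set e := harmonic n *: e0.
  have He : Ki e by apply: isc.
  have G1 := H1 n ltac:(lia). have G2 := H2 n ltac:(lia).
  have G3 := H3 n ltac:(lia). have G4 := H4 n ltac:(lia).
  exists (open_interval lt (x - e) (x + e)); split; [exact: ballB|exact: ball|].
  move=> y [ly ry]; have Ly := intlt _ _ ly; have Ry := intlt _ _ ry.
  have lo : forall w, K (x - w - e) -> lt w y.
    move=> w Ka; apply: ltint.
    rewrite (zt2 _ x w e y).
    exact: iaddK.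
  have hi : forall w, K (w - x - e) -> lt y w.
    move=> w Ka; apply: ltint.
    rewrite (zt3 _ x w e y).
    exact: iaddK.
  by split; split; [apply: lo|apply: hi|apply: lo|apply: hi].
- move=> x y xy.
  have Bopen : forall U, B U -> basis_generated_open B U.
    by move=> U BU z Uz; exists U; split.
  apply: contra_notP xy => Hn.
  have Hin : forall n, K ((y - x) + (harmonic n + harmonic n) *: e0)
                   /\ K ((x - y) + (harmonic n + harmonic n) *: e0).
    move=> n.
    have hn : (0:R) < harmonic n by apply: harmonic_gt0.
    set e := harmonic n *: e0.
    have He : Ki e by apply: isc.
    have : ~ (open_interval lt (x - e) (x + e) `&` open_interval lt (y - e) (y + e) = set0).
      move=> H0; apply: Hn; exists (open_interval lt (x - e) (x + e)),
        (open_interval lt (y - e) (y + e)); split => //;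
        [apply: Bopen; exact: ballB|apply: Bopen; exact: ballB|exact: ball|exact: ball].
    move=> /eqP /set0P [z [[l1 r1] [l2 r2]]].
    have a1 := isub _ (intlt _ _ l1); have a2 := isub _ (intlt _ _ r1).
    have a3 := isub _ (intlt _ _ l2); have a4 := isub _ (intlt _ _ r2).
    rewrite scalerDl; split.
    - by have := Kad _ _ a1 a4; rewrite zt4.
    - by have := Kad _ _ a3 a2; rewrite zt4.
  have hl : (fun n => harmonic n + harmonic n : R) @ \oo --> (0:R).
    by rewrite -(addr0 0); apply: cvgD; exact: cvg_harmonic.
  have K1 := Kcl _ _ (conv_shift _ _ _ C1 C3 (y - x) e0 _ hl) (fun n => (Hin n).1).
  have K2 := Kcl _ _ (conv_shift _ _ _ C1 C3 (x - y) e0 _ hl) (fun n => (Hin n).2).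
  apply/eqP; rewrite eq_sym -subr_eq0; apply/eqP; apply: Kanti => //.
  by rewrite opprB.
Qed.
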